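(* For every $0<\varepsilon\le1$ there exists a function $\hat a\in C^\infty(\mathbb R)$, $\hat a\not\equiv0$, with $\operatorname{supp}\hat a\subset[-2,2]$, such that for every integer $n\ge1$ the trigonometric polynomial $$L_n(\theta):=\sum_{j\in\mathbb Z}\hat a\Big(\frac jn\Big)e^{ij\theta}$$ satisfies $$|L_n(\theta)|\le c\,n\exp\left\{-\frac{c'\varepsilon\, n|\theta|}{[\ln(e+n|\theta|)]^{1+\varepsilon}}\right\},\qquad \theta\in[-\pi,\pi],$$ where $c'>0$ is an absolute constant and $c$ depends only on $\varepsilon$. *)

(* Defs.v *)
From Stdlib Require Import Reals Lra.
From Coquelicot Require Import Coquelicot.
Open Scope R_scope.

Definition smooth (f : R -> R) : Prop :=
  forall (k : nat) (x : R), ex_derive_n f k x.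

(* supp f ⊂ [-2,2]; since [-2,2] is closed this is equivalent to
   f vanishing outside [-2,2]. *)
Definition supp_in_m2_2 (f : R -> R) : Prop :=
  forall x : R, 2 < Rabs x -> f x = 0.

(* Real and imaginary parts of L_n(θ) = Σ_{j∈Z} a(j/n) e^{ijθ}.
   The sum is over j = k - 2n, k = 0..4n, i.e. |j| <= 2n; all other
   terms vanish when supp a ⊂ [-2,2]. *)
Definition jidx (n k : nat) : R := INR k - 2 * INR n.

Definition L_re (a : R -> R) (n : nat) (theta : R) : R :=
  sum_f_R0 (fun k => a (jidx n k / INR n) * cos (jidx n k * theta)) (4 * n).

Definition L_im (a : R -> R) (n : nat) (theta : R) : R :=
  sum_f_R0 (fun k => a (jidx n k / INR n) * sin (jidx n k * theta)) (4 * n).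

Definition L_abs (a : R -> R) (n : nat) (theta : R) : R :=
  sqrt (L_re a n theta ^ 2 + L_im a n theta ^ 2).

(* Main.v *)
Require Import Defs.
From Stdlib Require Import Reals Lra Lia.
From Coquelicot Require Import Coquelicot.
Open Scope R_scope.

Definition box (d : R) (f : R -> R) (x : R) : R := RInt f (x - d/2) (x + d/2) / d.
Definition cont (f : R -> R) : Prop := forall x, continuous f x.
Definition Lip1 (f : R -> R) : Prop := forall x y, Rabs (f x - f y) <= Rabs (x - y).

Lemma lip_cont f : Lip1 f -> cont f.
Proof.
  intros H x. apply continuity_pt_filterlim.
  intros eps Heps. exists eps. split; [lra|].
  intros y [_ Hy]. unfold dist in *; simpl in *. unfold R_dist in *.
  eapply Rle_lt_trans; [apply H|]. lra.
Qed.

Lemma cont_RInt f a b : cont f -> ex_RInt f a b.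
Proof. intros H. apply (ex_RInt_continuous (V := R_CompleteNormedModule)). intros; apply H. Qed.

Lemma RInt_shift f a b v : cont f ->
  RInt (fun t => f (t + v)) a b = RInt f (a + v) (b + v).
Proof.
  intros H.
  rewrite <- (Rmult_1_l a) at 2. rewrite <- (Rmult_1_l b) at 2.
  rewrite <- RInt_comp_lin by (apply cont_RInt; auto).
  apply RInt_ext. intros. replace (1*x+v) with (x+v) by ring. unfold scal; simpl; unfold mult; simpl; ring.
Qed.

Lemma RInt_minus' f g a b : cont f -> cont g ->
  RInt (fun t => f t - g t) a b = RInt f a b - RInt g a b.
Proof.
  intros Hf Hg. apply (RInt_minus f g); apply cont_RInt; auto.
Qed.

Lemma cont_minus f g : cont f -> cont g -> cont (fun t => f t - g t).
Proof.
  intros Hf Hg x. apply (continuous_minus f g); auto.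
Qed.

Lemma cont_shift f v : cont f -> cont (fun t => f (t + v)).
Proof.
  intros Hf x. apply (continuous_comp (fun t => t + v) f).
  - apply (continuous_plus (fun t => t) (fun _ => v)).
    apply continuous_id. apply continuous_const.
  - apply Hf.
Qed.

Lemma cont_const c : cont (fun _ => c).
Proof. intros x. apply continuous_const. Qed.

Lemma RInt_bound f a b M : a <= b -> cont f -> (forall t, a <= t <= b -> Rabs (f t) <= M) ->
  Rabs (RInt f a b) <= (b - a) * M.
Proof. intros. apply abs_RInt_le_const; auto. apply cont_RInt; auto. Qed.

Lemma box_bound d f x M : 0 < d -> cont f -> (forall t, Rabs (f t) <= M) ->
  Rabs (box d f x) <= M.
Proof.
  intros Hd Hf HM. unfold box. rewrite Rabs_div by lra.
  rewrite (Rabs_pos_eq d) by lra.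
  apply Rmult_le_reg_r with d; auto. unfold Rdiv. rewrite Rmult_assoc, Rinv_l by lra.
  rewrite Rmult_1_r.
  eapply Rle_trans. apply RInt_bound; auto. lra. intros; auto.
  apply Req_le; field.
Qed.

Lemma box_minus d f g x : 0 < d -> cont f -> cont g ->
  box d f x - box d g x = box d (fun t => f t - g t) x.
Proof.
  intros Hd Hf Hg. unfold box. rewrite RInt_minus' by auto. field. lra.
Qed.

Lemma box_shift d f x h : cont f -> box d f (x + h) = box d (fun t => f (t + h)) x.
Proof.
  intros Hf. unfold box. rewrite RInt_shift by auto. f_equal. f_equal; ring.
Qed.

Lemma box_minus_bound d f g x M : 0 < d -> cont f -> cont g ->
  (forall t, Rabs (f t - g t) <= M) -> Rabs (box d f x - box d g x) <= M.
Proof.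
  intros. rewrite box_minus by auto. apply box_bound; auto. apply cont_minus; auto.
Qed.

Lemma box_lip d f : 0 < d -> Lip1 f -> Lip1 (box d f).
Proof.
  intros Hd Hf x y. pose proof (lip_cont f Hf) as Hc.
  replace x with (0 + x) by ring. replace y with (0 + y) by ring.
  rewrite !box_shift by auto.
  apply box_minus_bound; auto; try (apply cont_shift; auto).
  intros t. eapply Rle_trans. apply Hf. apply Req_le; f_equal; ring.
Qed.

Lemma box_near d f x : 0 < d -> Lip1 f -> Rabs (box d f x - f x) <= d / 2.
Proof.
  intros Hd Hf. pose proof (lip_cont f Hf) as Hc.
  assert (E : f x = box d (fun _ => f x) x).
  { unfold box. rewrite RInt_const. simpl. unfold scal; simpl. unfold mult; simpl. field. lra. }
  rewrite E. rewrite box_minus by (auto; apply cont_const).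
  unfold box. rewrite Rabs_div by lra. rewrite (Rabs_pos_eq d) by lra.
  apply Rmult_le_reg_r with d; auto. unfold Rdiv. rewrite Rmult_assoc, Rinv_l by lra.
  rewrite Rmult_1_r.
  eapply Rle_trans. apply RInt_bound with (M := d/2). lra. apply cont_minus; auto; apply cont_const.
  intros t Ht. eapply Rle_trans. apply Hf. unfold Rabs; destruct Rcase_abs; lra.
  apply Req_le; field.
Qed.

Lemma box_diff d F x h M : 0 < d -> 0 <= h -> cont F -> (forall t, Rabs (F t) <= M) ->
  Rabs (box d F (x + h) - box d F x) <= 2 * h * M / d.
Proof.
  intros Hd Hh Hc HM. unfold box.
  assert (C1 := fun a b => cont_RInt F a b Hc).
  assert (E1 : RInt F (x + h - d/2) (x + h + d/2) =
               RInt F (x + h - d/2) (x + d/2) + RInt F (x + d/2) (x + h + d/2)).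
  { symmetry. apply (RInt_Chasles F); auto. }
  assert (E2 : RInt F (x - d/2) (x + d/2) =
               RInt F (x - d/2) (x + h - d/2) + RInt F (x + h - d/2) (x + d/2)).
  { symmetry. apply (RInt_Chasles F); auto. }
  rewrite E1, E2.
  replace ((RInt F (x + h - d / 2) (x + d / 2) + RInt F (x + d / 2) (x + h + d / 2)) / d -
   (RInt F (x - d / 2) (x + h - d / 2) + RInt F (x + h - d / 2) (x + d / 2)) / d)
   with ((RInt F (x + d / 2) (x + h + d / 2) - RInt F (x - d / 2) (x + h - d / 2)) / d)
   by (field; lra).
  rewrite Rabs_div by lra. rewrite (Rabs_pos_eq d) by lra.
  apply Rmult_le_reg_r with d; auto. unfold Rdiv. rewrite Rmult_assoc, Rinv_l by lra.
  rewrite Rmult_1_r. rewrite Rmult_assoc, Rinv_l by lra. rewrite Rmult_1_r.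
  eapply Rle_trans. apply Rabs_triang. rewrite Rabs_Ropp.
  assert (B1 := RInt_bound F (x + d/2) (x + h + d/2) M ltac:(lra) Hc (fun t _ => HM t)).
  assert (B2 := RInt_bound F (x - d/2) (x + h - d/2) M ltac:(lra) Hc (fun t _ => HM t)).
  lra.
Qed.

Lemma box_deriv d f x : 0 < d -> cont f ->
  is_derive (box d f) x ((f (x + d/2) - f (x - d/2)) / d).
Proof.
  intros Hd Hc.
  set (G := fun b => RInt f 0 b).
  assert (HG : forall b, is_derive G b (f b)).
  { intros b. apply (is_derive_RInt f G 0 b).
    apply filter_forall. intros b0. apply (RInt_correct (V := R_CompleteNormedModule)). apply cont_RInt; auto.
    apply Hc. }
  assert (HGc : forall c, is_derive (fun x => G (x + c)) x (f (x + c))).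
  { intros c. pose proof (is_derive_comp G (fun t => t + c) x (f (x + c)) 1 (HG _)) as H.
    assert (H1 : is_derive (fun t => t + c) x 1).
    { pose proof (is_derive_plus (fun t : R => t) (fun _ => c) x one zero (is_derive_id x) (is_derive_const c x)) as H2.
      simpl in H2. unfold plus, zero, one in H2; simpl in H2.
      replace 1 with (1 + 0) by ring. exact H2. }
    specialize (H H1).
    unfold scal in H; simpl in H; unfold mult in H; simpl in H. rewrite Rmult_1_l in H. exact H. }
  pose proof (is_derive_minus _ _ x _ _ (HGc (d/2)) (HGc (-(d/2)))) as H.
  pose proof (is_derive_scal _ x (/d) _ H) as H2.
  assert (E : forall t, /d * minus (G (t + d/2)) (G (t + - (d/2))) = box d f t).
  { intros t. unfold box, G, minus, plus, opp; simpl.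
    assert (C := RInt_Chasles f 0 (t - d/2) (t + d/2) (cont_RInt _ _ _ Hc) (cont_RInt _ _ _ Hc)).
    unfold plus in C; simpl in C. replace (t + - (d/2)) with (t - d/2) by ring.
    rewrite <- C. field. lra. }
  apply (is_derive_ext _ _ x _ E).
  replace ((f (x + d / 2) - f (x - d / 2)) / d) with (/ d * minus (f (x + d / 2)) (f (x + - (d / 2)))).
  exact H2. unfold minus, plus, opp; simpl. replace (x + - (d/2)) with (x - d/2) by ring. field. lra.
Qed.

Lemma exp_le' x y : x <= y -> exp x <= exp y.
Proof. intros [H|H]. left; apply exp_increasing; auto. subst; lra. Qed.

Lemma e_gt2 : 2 < exp 1.
Proof. pose proof (exp_ineq1 1 ltac:(lra)). lra. Qed.

Lemma e_le3 : exp 1 <= 3.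
Proof. apply exp_le_3. Qed.

Definition Lt (eps : R) (m : nat) : R := exp (- eps * ln (ln (INR m + exp 1))).
Definition dl (eps : R) (m : nat) : R := Lt eps m - Lt eps (S m).

Lemma ln_ge1 x : exp 1 <= x -> 1 <= ln x.
Proof.
  intros H. rewrite <- (ln_exp 1) at 1. apply ln_le; auto. apply exp_pos.
Qed.

Lemma lnm_ge1 m : 1 <= ln (INR m + exp 1).
Proof. apply ln_ge1. pose proof (pos_INR m); lra. Qed.

Lemma Lt_pos eps m : 0 < Lt eps m.
Proof. apply exp_pos. Qed.

Lemma Lt_0 eps : Lt eps 0 = 1.
Proof. unfold Lt. simpl. rewrite Rplus_0_l, ln_exp, ln_1. rewrite Rmult_0_r. apply exp_0. Qed.

Lemma Lt_decr eps m : 0 < eps -> Lt eps (S m) < Lt eps m.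
Proof.
  intros He. unfold Lt. apply exp_increasing.
  assert (ln (ln (INR m + exp 1)) < ln (ln (INR (S m) + exp 1))).
  { pose proof (lnm_ge1 m). apply ln_increasing. lra. apply ln_increasing.
    pose proof (pos_INR m); pose proof e_gt2; lra. rewrite S_INR; lra. }
  nra.
Qed.

Lemma Lt_mono eps m p : 0 < eps -> Lt eps (m + p) <= Lt eps m.
Proof.
  intros He. induction p. rewrite Nat.add_0_r; lra.
  rewrite Nat.add_succ_r. pose proof (Lt_decr eps (m+p) He). lra.
Qed.

Lemma Lt_mono' eps m n : 0 < eps -> (m <= n)%nat -> Lt eps n <= Lt eps m.
Proof.
  intros He H. replace n with (m + (n - m))%nat by lia. apply Lt_mono; auto.
Qed.

Lemma dl_pos eps m : 0 < eps -> 0 < dl eps m.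
Proof. intros. unfold dl. pose proof (Lt_decr eps m H). lra. Qed.

Lemma Lt_to0 eps eta : 0 < eps -> 0 < eta -> exists M, Lt eps M < eta.
Proof.
  intros He Hh.
  destruct (INR_archimed 1 (exp (exp (- ln eta / eps))) ltac:(lra)) as [M HM].
  exists M. unfold Lt. rewrite <- (exp_ln eta) by auto. apply exp_increasing.
  rewrite Rmult_1_r in HM.
  assert (H1 : exp (- ln eta / eps) < ln (INR M + exp 1)).
  { rewrite <- (ln_exp (exp (- ln eta / eps))). apply ln_increasing. apply exp_pos.
    pose proof (exp_pos 1). lra. }
  assert (H2 : - ln eta / eps < ln (ln (INR M + exp 1))).
  { rewrite <- (ln_exp (- ln eta / eps)) at 1. apply ln_increasing. apply exp_pos. auto. }
  apply Rmult_lt_compat_l with (r := eps) in H2; auto.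
  replace (eps * (- ln eta / eps)) with (- ln eta) in H2 by (field; lra). lra.
Qed.

Lemma vanish_le eps j a b : 0 < eps -> (forall N, a <= b + Lt eps (j + N)) -> a <= b.
Proof.
  intros He H. destruct (Rle_lt_dec a b) as [|Hab]; auto.
  destruct (Lt_to0 eps (a - b) He ltac:(lra)) as [M HM].
  specialize (H M). pose proof (Lt_mono' eps M (j+M) He ltac:(lia)). lra.
Qed.

Lemma dl_lb eps m : 0 < eps ->
  eps / ((INR m + 1 + exp 1) * Rpower (ln (INR m + 1 + exp 1)) (1 + eps)) <= dl eps m.
Proof.
  intros He.
  set (phi := fun t => exp (- eps * ln (ln t))).
  set (df := fun x => - eps * (/ ln x * / x) * exp (- eps * ln (ln x))).
  assert (Hd : forall x, 1 < x -> is_derive phi x (df x)).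
  { intros x Hx. unfold phi, df. auto_derive.
    repeat split; try lra. rewrite <- ln_1. apply ln_increasing; lra. field.
    split. lra. apply Rgt_not_eq. rewrite <- ln_1. apply ln_increasing; lra. }
  set (a := INR m + exp 1). set (b := INR m + 1 + exp 1).
  pose proof (pos_INR m) as Hm. pose proof e_gt2 as He2.
  assert (Hab : a < b) by (unfold a, b; lra).
  destruct (MVT_gen phi a b df) as [c [Hc Hmvt]].
  { intros x Hx. apply Hd. rewrite Rmin_left in Hx by lra. unfold a in Hx. lra. }
  { intros x Hx. rewrite Rmin_left, Rmax_right in Hx by lra.
    apply continuity_pt_filterlim. apply (ex_derive_continuous phi).
    eexists. apply Hd. unfold a in Hx; lra. }
  rewrite Rmin_left, Rmax_right in Hc by lra.
  assert (E1 : dl eps m = phi a - phi b).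
  { unfold dl, Lt, phi, a, b. rewrite S_INR. reflexivity. }
  rewrite E1. replace (phi a - phi b) with (- (df c * (b - a))) by lra.
  replace (b - a) with 1 by (unfold a, b; ring). unfold df.
  assert (Hc1 : exp 1 <= c) by (unfold a in Hc; lra).
  assert (Hlc : 1 <= ln c) by (apply ln_ge1; auto).
  assert (Hlb : ln c <= ln b) by (apply ln_le; lra).
  assert (HE : exp (eps * ln (ln c)) <= exp (eps * ln (ln b))).
  { apply exp_le'. apply Rmult_le_compat_l. lra. apply ln_le; lra. }
  assert (Rp : Rpower (ln b) (1 + eps) = ln b * exp (eps * ln (ln b))).
  { rewrite Rpower_plus, Rpower_1 by lra. reflexivity. }
  rewrite Rp.
  replace (- (- eps * (/ ln c * / c) * exp (- eps * ln (ln c)) * 1)) with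
    (eps / (c * (ln c * exp (eps * ln (ln c))))).
  2:{ replace (- eps * ln (ln c)) with (- (eps * ln (ln c))) by ring. rewrite exp_Ropp.
      field. pose proof (exp_pos (eps * ln (ln c))). repeat split; lra. }
  unfold Rdiv. apply Rmult_le_compat_l. lra.
  apply Rinv_le_contravar.
  { pose proof (exp_pos (eps * ln (ln c))). apply Rmult_lt_0_compat. lra. apply Rmult_lt_0_compat; lra. }
  pose proof (exp_pos (eps * ln (ln c))).
  apply Rmult_le_compat; try lra. apply Rmult_le_pos; lra.
  apply Rmult_le_compat; lra.
Qed.

Definition tent (x : R) : R := Rmax 0 (1 - Rabs x).

Lemma tent_lip : Lip1 tent.
Proof.
  intros x y. unfold tent, Rmax.
  destruct (Rle_dec 0 (1 - Rabs x)); destruct (Rle_dec 0 (1 - Rabs y));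
  unfold Rabs in *; repeat destruct Rcase_abs; lra.
Qed.

Lemma tent_bound x : Rabs (tent x) <= 1.
Proof. unfold tent, Rmax. destruct Rle_dec; unfold Rabs in *; repeat destruct Rcase_abs; lra. Qed.

Lemma tent_supp x : 1 <= Rabs x -> tent x = 0.
Proof. intros. unfold tent, Rmax. destruct Rle_dec; lra. Qed.

Fixpoint F (eps : R) (j N : nat) : R -> R :=
  match N with
  | O => tent
  | S N' => box (dl eps j) (F eps (S j) N')
  end.


Lemma F_lip eps N : 0 < eps -> forall j, Lip1 (F eps j N).
Proof.
  intros He. induction N; intros j; simpl. apply tent_lip.
  apply box_lip. apply dl_pos; auto. apply IHN.
Qed.

Lemma F_cont eps N j : 0 < eps -> cont (F eps j N).
Proof. intros. apply lip_cont, F_lip; auto. Qed.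

Lemma F_bound eps N : 0 < eps -> forall j x, Rabs (F eps j N x) <= 1.
Proof.
  intros He. induction N; intros j x; simpl. apply tent_bound.
  apply box_bound. apply dl_pos; auto. apply F_cont; auto. intros; apply IHN.
Qed.

Lemma box_zero d f x : (forall t, x - d/2 <= t <= x + d/2 -> f t = 0) -> 0 < d -> box d f x = 0.
Proof.
  intros H Hd. unfold box. rewrite (RInt_ext f (fun _ => 0)).
  rewrite RInt_const. unfold scal; simpl; unfold mult; simpl. field. lra.
  intros t Ht. rewrite Rmin_left, Rmax_right in Ht by lra. apply H. lra.
Qed.

Lemma F_supp eps N : 0 < eps -> forall j x, 1 + Lt eps j / 2 < Rabs x -> F eps j N x = 0.
Proof.
  intros He. induction N; intros j x Hx; simpl.
  - apply tent_supp. pose proof (Lt_pos eps j). lra.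
  - apply box_zero. 2: apply dl_pos; auto.
    intros t Ht. apply IHN. unfold dl in Ht.
    unfold Rabs in *; repeat destruct Rcase_abs; lra.
Qed.

Lemma F_step eps N : 0 < eps -> forall j x, Rabs (F eps j (S N) x - F eps j N x) <= dl eps (j + N) / 2.
Proof.
  intros He. induction N; intros j x.
  - simpl. rewrite Nat.add_0_r. apply box_near. apply dl_pos; auto. apply tent_lip.
  - change (F eps j (S (S N)) x) with (box (dl eps j) (F eps (S j) (S N)) x).
    change (F eps j (S N) x) with (box (dl eps j) (F eps (S j) N) x).
    apply box_minus_bound. apply dl_pos; auto. apply F_cont; auto. apply F_cont; auto.
    intros t. replace (j + S N)%nat with (S j + N)%nat by lia. apply IHN.
Qed.

Lemma F_tail eps j N p x : 0 < eps ->
  Rabs (F eps j (N + p) x - F eps j N x) <= (Lt eps (j + N) - Lt eps (j + N + p)) / 2.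
Proof.
  intros He. induction p.
  - rewrite !Nat.add_0_r. rewrite Rminus_eq_0, Rabs_R0. lra.
  - rewrite Nat.add_succ_r.
    pose proof (F_step eps (N + p) He j x) as H.
    replace (F eps j (S (N + p)) x - F eps j N x) with
      ((F eps j (S (N + p)) x - F eps j (N + p) x) + (F eps j (N + p) x - F eps j N x)) by ring.
    eapply Rle_trans. apply Rabs_triang.
    unfold dl in H. replace (S (j + (N + p))) with (j + N + S p)%nat in H by lia.
    replace (j + (N + p))%nat with (j + N + p)%nat in H by lia. lra.
Qed.

Lemma F_tail' eps j N p x : 0 < eps ->
  Rabs (F eps j (N + p) x - F eps j N x) <= Lt eps (j + N) / 2.
Proof. intros. pose proof (F_tail eps j N p x H). pose proof (Lt_pos eps (j+N+p)). lra. Qed.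

Lemma F_cauchy eps j x : 0 < eps -> ex_finite_lim_seq (fun N => F eps j N x).
Proof.
  intros He. apply ex_lim_seq_cauchy_corr. intros [eta Heta]. simpl.
  destruct (Lt_to0 eps eta He Heta) as [M HM].
  exists M. intros n m Hn Hm.
  pose proof (F_tail' eps j M (n - M) x He) as A.
  pose proof (F_tail' eps j M (m - M) x He) as B.
  replace (M + (n - M))%nat with n in A by lia.
  replace (M + (m - M))%nat with m in B by lia.
  pose proof (Lt_mono' eps M (j + M) He ltac:(lia)).
  replace (F eps j n x - F eps j m x) with ((F eps j n x - F eps j M x) - (F eps j m x - F eps j M x)) by ring.
  eapply Rle_lt_trans. apply Rabs_triang. rewrite Rabs_Ropp. lra.
Qed.

Definition w (eps : R) (j : nat) (x : R) : R := real (Lim_seq (fun N => F eps j N x)).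

Lemma w_lim eps j x : 0 < eps -> forall eta, 0 < eta ->
  exists M, forall n, (M <= n)%nat -> Rabs (F eps j n x - w eps j x) < eta.
Proof.
  intros He eta Heta. destruct (F_cauchy eps j x He) as [l Hl].
  assert (Ew : w eps j x = l) by (unfold w; rewrite (is_lim_seq_unique _ _ Hl); reflexivity).
  rewrite Ew. apply is_lim_seq_spec in Hl. destruct (Hl (mkposreal eta Heta)) as [M HM].
  exists M. intros n Hn. apply (HM n Hn).
Qed.

Lemma w_approx eps j N x : 0 < eps -> Rabs (w eps j x - F eps j N x) <= Lt eps (j + N) / 2.
Proof.
  intros He. apply Rle_plus_epsilon. intros eta Heta.
  destruct (w_lim eps j x He eta Heta) as [M HM].
  specialize (HM (N + M)%nat ltac:(lia)).
  pose proof (F_tail' eps j N M x He).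
  replace (w eps j x - F eps j N x) with (- (F eps j (N + M) x - w eps j x) + (F eps j (N + M) x - F eps j N x)) by ring.
  eapply Rle_trans. apply Rabs_triang. rewrite Rabs_Ropp. lra.
Qed.

Lemma w_lip eps j : 0 < eps -> Lip1 (w eps j).
Proof.
  intros He x y. apply (vanish_le eps j); auto. intros N.
  pose proof (w_approx eps j N x He). pose proof (w_approx eps j N y He).
  pose proof (F_lip eps N He j x y).
  replace (w eps j x - w eps j y) with ((w eps j x - F eps j N x) - (w eps j y - F eps j N y) + (F eps j N x - F eps j N y)) by ring.
  eapply Rle_trans. apply Rabs_triang. eapply Rle_trans. apply Rplus_le_compat_r. apply Rabs_triang.
  rewrite Rabs_Ropp. lra.
Qed.

Lemma w_cont eps j : 0 < eps -> cont (w eps j).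
Proof. intros. apply lip_cont, w_lip; auto. Qed.

Lemma w_bound eps j x : 0 < eps -> Rabs (w eps j x) <= 1.
Proof.
  intros He. apply (vanish_le eps j); auto. intros N.
  pose proof (w_approx eps j N x He). pose proof (F_bound eps N He j x).
  replace (w eps j x) with ((w eps j x - F eps j N x) + F eps j N x) by ring.
  eapply Rle_trans. apply Rabs_triang. pose proof (Lt_pos eps (j+N)). lra.
Qed.

Lemma w_supp eps j x : 0 < eps -> 1 + Lt eps j / 2 < Rabs x -> w eps j x = 0.
Proof.
  intros He Hx. apply Rabs_eq_0. apply Rle_antisym. 2: apply Rabs_pos.
  apply (vanish_le eps j); auto. intros N.
  pose proof (w_approx eps j N x He). rewrite (F_supp eps N He j x Hx) in H.
  rewrite Rminus_0_r in H. pose proof (Lt_pos eps (j+N)). lra.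
Qed.

Lemma w_rec eps j x : 0 < eps -> w eps j x = box (dl eps j) (w eps (S j)) x.
Proof.
  intros He. apply Rminus_diag_uniq. apply Rabs_eq_0. apply Rle_antisym. 2: apply Rabs_pos.
  apply (vanish_le eps (S j)); auto. intros N.
  pose proof (w_approx eps j (S N) x He).
  assert (B : Rabs (box (dl eps j) (F eps (S j) N) x - box (dl eps j) (w eps (S j)) x) <= Lt eps (S j + N) / 2).
  { apply box_minus_bound. apply dl_pos; auto. apply F_cont; auto. apply w_cont; auto.
    intros t. pose proof (w_approx eps (S j) N t He). rewrite <- Rabs_Ropp.
    replace (- (F eps (S j) N t - w eps (S j) t)) with (w eps (S j) t - F eps (S j) N t) by ring. auto. }
  change (F eps j (S N) x) with (box (dl eps j) (F eps (S j) N) x) in H.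
  replace (j + S N)%nat with (S j + N)%nat in H by lia.
  replace (w eps j x - box (dl eps j) (w eps (S j)) x) with
    ((w eps j x - box (dl eps j) (F eps (S j) N) x) + (box (dl eps j) (F eps (S j) N) x - box (dl eps j) (w eps (S j)) x)) by ring.
  eapply Rle_trans. apply Rabs_triang. lra.
Qed.

Lemma w0_pos eps : 0 < eps -> 1/2 <= w eps 0 0.
Proof.
  intros He. pose proof (w_approx eps 0 0 0 He). simpl in H. rewrite Lt_0 in H.
  unfold tent in H. rewrite Rabs_R0, Rminus_0_r in H. rewrite Rmax_right in H by lra.
  unfold Rabs in H; destruct Rcase_abs; lra.
Qed.

Definition Pk (k : nat) (f : R -> R) : Prop := forall k' x, (k' <= k)%nat -> ex_derive_n f k' x.

Lemma Pk_shift k f b : Pk k f -> Pk k (fun y => f (y + b)).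
Proof. intros H k' x Hk. apply ex_derive_n_comp_trans. apply H; auto. Qed.

Lemma Pk_minus k f g : Pk k f -> Pk k g -> Pk k (fun y => f y - g y).
Proof.
  intros Hf Hg k' x Hk. apply ex_derive_n_minus; apply filter_forall; intros y k'' H''; [apply Hf|apply Hg]; lia.
Qed.

Lemma Pk_scal k f a : Pk k f -> Pk k (fun y => a * f y).
Proof. intros H k' x Hk. apply ex_derive_n_scal_l. apply H; auto. Qed.

Lemma Pk_deriv k f g : (forall x, is_derive f x (g x)) -> Pk k g -> Pk (S k) f.
Proof.
  intros Hd Hg.
  assert (E : forall m y, Derive_n f (S m) y = Derive_n g m y).
  { induction m; intros y. simpl. apply is_derive_unique. apply Hd.
    change (Derive (Derive_n f (S m)) y = Derive (Derive_n g m) y). apply Derive_ext. auto. }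
  intros k' x Hk. destruct k' as [|k'']. simpl; auto.
  simpl. destruct k'' as [|m].
  - simpl. eexists. apply Hd.
  - apply (ex_derive_ext (Derive_n g m)). intros; symmetry; apply E.
    apply (Hg (S m) x). lia.
Qed.

Lemma w_Pk eps k : 0 < eps -> forall j, Pk k (w eps j).
Proof.
  intros He. induction k; intros j.
  - intros k' x Hk. replace k' with 0%nat by lia. simpl; auto.
  - set (d := dl eps j).
    apply (Pk_deriv k (w eps j) (fun y => / d * (w eps (S j) (y + d/2) - w eps (S j) (y + - (d/2))))).
    + intros x. apply (is_derive_ext (box d (w eps (S j)))). intros t. symmetry. apply w_rec; auto.
      replace (/ d * (w eps (S j) (x + d / 2) - w eps (S j) (x + - (d / 2)))) with
        ((w eps (S j) (x + d / 2) - w eps (S j) (x - d / 2)) / d) by (unfold Rminus; field; apply Rgt_not_eq, dl_pos; auto).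
      apply box_deriv. apply dl_pos; auto. apply w_cont; auto.
    + apply Pk_scal. apply Pk_minus; apply Pk_shift; apply IHk.
Qed.

Lemma w_smooth eps j : 0 < eps -> forall k x, ex_derive_n (w eps j) k x.
Proof. intros He k x. apply (w_Pk eps k He j k x). lia. Qed.

Definition Dh (h : R) (f : R -> R) : R -> R := fun x => f (x + h) - f x.
Definition Diter (h : R) (m : nat) (f : R -> R) : R -> R := Nat.iter m (Dh h) f.

Lemma Diter_S h m f x : Diter h (S m) f x = Diter h m f (x + h) - Diter h m f x.
Proof. reflexivity. Qed.

Lemma Diter_cont h m f : cont f -> cont (Diter h m f).
Proof.
  intros Hf. induction m. exact Hf.
  intros x. apply (cont_minus (fun y => Diter h m f (y + h)) (Diter h m f)).
  apply cont_shift; auto. auto.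
Qed.

Lemma Diter_box h m d f : 0 < d -> cont f -> forall x, Diter h m (box d f) x = box d (Diter h m f) x.
Proof.
  intros Hd Hf. induction m; intros x. reflexivity.
  rewrite !Diter_S. rewrite !IHm. rewrite box_shift by (apply Diter_cont; auto).
  rewrite box_minus; auto. apply cont_shift, Diter_cont; auto. apply Diter_cont; auto.
Qed.

Fixpoint prodB (eps h : R) (j k : nat) : R :=
  match k with
  | O => 1
  | S k' => 2 * h / dl eps j * prodB eps h (S j) k'
  end.

Lemma Diter_ext h m f g : (forall x, f x = g x) -> forall x, Diter h m f x = Diter h m g x.
Proof.
  intros H. induction m; intros x. apply H. rewrite !Diter_S, !IHm. reflexivity.
Qed.

Lemma Diter_S' h m f x : Diter h (S m) f x = Diter h m (Dh h f) x.
Proof.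
  revert x. induction m; intros x. reflexivity.
  rewrite Diter_S. rewrite !IHm. reflexivity.
Qed.

Lemma w_Diter eps h k : 0 < eps -> 0 <= h -> forall j x,
  Rabs (Diter h k (w eps j) x) <= prodB eps h j k.
Proof.
  intros He Hh. induction k; intros j x.
  - simpl. apply w_bound; auto.
  - rewrite Diter_S.
    rewrite (Diter_ext h k (w eps j) (box (dl eps j) (w eps (S j)))) by (intros; apply w_rec; auto).
    rewrite (Diter_ext h k (w eps j) (box (dl eps j) (w eps (S j)))) by (intros; apply w_rec; auto).
    rewrite !Diter_box by (try apply dl_pos; auto; apply w_cont; auto).
    simpl prodB.
    replace (2 * h / dl eps j * prodB eps h (S j) k) with (2 * h * prodB eps h (S j) k / dl eps j) by (field; apply Rgt_not_eq, dl_pos; auto).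
    apply box_diff; auto. apply dl_pos; auto. apply Diter_cont, w_cont; auto.
Qed.

Lemma Diter_scale n m f : 0 < n -> forall x,
  Diter 1 m (fun y => f (y / n)) x = Diter (1 / n) m f (x / n).
Proof.
  intros Hn. induction m; intros x. reflexivity.
  rewrite !Diter_S, !IHm. f_equal. f_equal. field. lra.
Qed.

Definition SR (g : R -> R) (x0 th : R) (N : nat) : R :=
  sum_f_R0 (fun i => g (x0 + INR i) * cos ((x0 + INR i) * th)) N.
Definition SI (g : R -> R) (x0 th : R) (N : nat) : R :=
  sum_f_R0 (fun i => g (x0 + INR i) * sin ((x0 + INR i) * th)) N.

Lemma trig_c a th : cos a = cos (a + th) * cos th + sin (a + th) * sin th.
Proof. rewrite <- cos_minus. f_equal; ring. Qed.
Lemma trig_s a th : sin a = sin (a + th) * cos th - cos (a + th) * sin th.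
Proof. rewrite <- sin_minus. f_equal; ring. Qed.

Lemma shift_cos g x0 th N :
  sum_f_R0 (fun i => g (x0 + INR i + 1) * cos ((x0 + INR i) * th)) N =
  cos th * (SR g x0 th N - g x0 * cos (x0 * th) + g (x0 + INR N + 1) * cos ((x0 + INR N + 1) * th)) +
  sin th * (SI g x0 th N - g x0 * sin (x0 * th) + g (x0 + INR N + 1) * sin ((x0 + INR N + 1) * th)).
Proof.
  induction N.
  - unfold SR, SI; simpl. rewrite !Rplus_0_r.
    rewrite (trig_c (x0 * th) th). replace ((x0 + 1) * th) with (x0 * th + th) by ring. ring.
  - unfold SR, SI in *. rewrite !tech5. cbv beta. rewrite IHN. rewrite S_INR.
    set (y := (x0 + INR N + 1) * th).
    replace ((x0 + (INR N + 1)) * th) with y by (unfold y; ring).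
    replace ((x0 + (INR N + 1) + 1) * th) with (y + th) by (unfold y; ring).
    replace (x0 + (INR N + 1)) with (x0 + INR N + 1) by ring.
    rewrite (trig_c y th). ring.
Qed.

Lemma shift_sin g x0 th N :
  sum_f_R0 (fun i => g (x0 + INR i + 1) * sin ((x0 + INR i) * th)) N =
  cos th * (SI g x0 th N - g x0 * sin (x0 * th) + g (x0 + INR N + 1) * sin ((x0 + INR N + 1) * th)) -
  sin th * (SR g x0 th N - g x0 * cos (x0 * th) + g (x0 + INR N + 1) * cos ((x0 + INR N + 1) * th)).
Proof.
  induction N.
  - unfold SR, SI; simpl. rewrite !Rplus_0_r.
    rewrite (trig_s (x0 * th) th). replace ((x0 + 1) * th) with (x0 * th + th) by ring. ring.
  - unfold SR, SI in *. rewrite !tech5. cbv beta. rewrite IHN. rewrite S_INR.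
    set (y := (x0 + INR N + 1) * th).
    replace ((x0 + (INR N + 1)) * th) with y by (unfold y; ring).
    replace ((x0 + (INR N + 1) + 1) * th) with (y + th) by (unfold y; ring).
    replace (x0 + (INR N + 1)) with (x0 + INR N + 1) by ring.
    rewrite (trig_s y th). ring.
Qed.

Lemma sum_minus' (u v : nat -> R) N : sum_f_R0 (fun i => u i - v i) N = sum_f_R0 u N - sum_f_R0 v N.
Proof. induction N; simpl; [|rewrite IHN]; ring. Qed.

Lemma step_SR g x0 th N : g x0 = 0 -> g (x0 + INR N + 1) = 0 ->
  SR (Dh 1 g) x0 th N = (cos th - 1) * SR g x0 th N + sin th * SI g x0 th N.
Proof.
  intros H0 H1. unfold SR at 1. unfold Dh.
  rewrite (sum_eq _ (fun i => g (x0 + INR i + 1) * cos ((x0 + INR i) * th) - g (x0 + INR i) * cos ((x0 + INR i) * th))).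
  2:{ intros; ring. }
  rewrite sum_minus', shift_cos. fold (SR g x0 th N). rewrite H0, H1. ring.
Qed.

Lemma step_SI g x0 th N : g x0 = 0 -> g (x0 + INR N + 1) = 0 ->
  SI (Dh 1 g) x0 th N = (cos th - 1) * SI g x0 th N - sin th * SR g x0 th N.
Proof.
  intros H0 H1. unfold SI at 1. unfold Dh.
  rewrite (sum_eq _ (fun i => g (x0 + INR i + 1) * sin ((x0 + INR i) * th) - g (x0 + INR i) * sin ((x0 + INR i) * th))).
  2:{ intros; ring. }
  rewrite sum_minus', shift_sin. fold (SI g x0 th N). rewrite H0, H1. ring.
Qed.

Lemma iter_Q g x0 th N k :
  (forall m, (m < k)%nat -> Diter 1 m g x0 = 0 /\ Diter 1 m g (x0 + INR N + 1) = 0) ->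
  SR (Diter 1 k g) x0 th N ^ 2 + SI (Diter 1 k g) x0 th N ^ 2 =
  (2 - 2 * cos th) ^ k * (SR g x0 th N ^ 2 + SI g x0 th N ^ 2).
Proof.
  induction k; intros H.
  - simpl. ring.
  - change (Diter 1 (S k) g) with (Dh 1 (Diter 1 k g)).
    destruct (H k ltac:(lia)) as [H0 H1].
    rewrite step_SR, step_SI by auto.
    rewrite <- (tech_pow_Rmult (2 - 2 * cos th) k). rewrite Rmult_assoc. rewrite <- IHk by (intros; apply H; lia).
    pose proof (sin2_cos2 th). unfold Rsqr in *. nra.
Qed.

Lemma Cmod_pair a b : Cmod (a, b) = sqrt (a ^ 2 + b ^ 2).
Proof. reflexivity. Qed.

Lemma Q_bound G x0 th N M : (forall i, (i <= N)%nat -> Rabs (G (x0 + INR i)) <= M) ->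
  sqrt (SR G x0 th N ^ 2 + SI G x0 th N ^ 2) <= INR (S N) * M.
Proof.
  assert (T : forall g c s, c ^ 2 + s ^ 2 = 1 -> sqrt ((g * c) ^ 2 + (g * s) ^ 2) = Rabs g).
  { intros g c s Hcs. replace ((g * c) ^ 2 + (g * s) ^ 2) with (g ^ 2) by (rewrite <- Rmult_1_r at 1; rewrite <- Hcs; ring).
    rewrite <- sqrt_Rsqr_abs. unfold Rsqr. f_equal. ring. }
  assert (CS : forall t, cos t ^ 2 + sin t ^ 2 = 1).
  { intros t. pose proof (sin2_cos2 t). unfold Rsqr in H. nra. }
  induction N; intros H.
  - unfold SR, SI; simpl sum_f_R0. rewrite T by apply CS. simpl. rewrite Rmult_1_l. apply (H 0%nat). lia.
  - unfold SR, SI. rewrite !tech5. fold (SR G x0 th N) (SI G x0 th N).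
    rewrite <- Cmod_pair. change (SR G x0 th N + G (x0 + INR (S N)) * cos ((x0 + INR (S N)) * th),
      SI G x0 th N + G (x0 + INR (S N)) * sin ((x0 + INR (S N)) * th)) with
     (Cplus (SR G x0 th N, SI G x0 th N) (G (x0 + INR (S N)) * cos ((x0 + INR (S N)) * th), G (x0 + INR (S N)) * sin ((x0 + INR (S N)) * th))).
    eapply Rle_trans. apply Cmod_triangle. rewrite !Cmod_pair. rewrite T by apply CS.
    rewrite (S_INR (S N)).
    assert (A := IHN (fun i Hi => H i ltac:(lia))). assert (B := H (S N) ltac:(lia)). lra.
Qed.

Lemma sin_lb_t t : 0 <= t -> t <= 2 -> t / 3 <= sin t.
Proof.
  intros H0 H2. assert (HP : t <= PI). { pose proof PI2_1. lra. }
  pose proof (SIN t H0 HP) as [H _].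
  replace (sin_lb t) with (t - t^3/6 + t^5/120 - t^7/5040) in H.
  2:{ unfold sin_lb, sin_approx, sin_term. simpl. field. }
  eapply Rle_trans; [|exact H].
  assert (t*t <= 4) by nra.
  assert (0 <= t^5) by (apply pow_le; lra).
  assert (t^3 <= 4 * t) by (simpl; nra).
  assert (t^7 <= 4 * t^5) by (replace (t^7) with (t*t*t^5) by ring; nra).
  lra.
Qed.

Lemma cos_gap th : -PI <= th <= PI -> (Rabs th / 3) ^ 2 <= 2 - 2 * cos th.
Proof.
  intros H.
  assert (E : 2 - 2 * cos th = 4 * sin (Rabs th / 2) ^ 2).
  { unfold Rabs; destruct Rcase_abs.
    - replace th with (2 * (- (- th / 2))) at 1 by field. rewrite cos_2a_sin, sin_neg. simpl. unfold Rsqr. ring.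
    - replace th with (2 * (th / 2)) at 1 by field. rewrite cos_2a_sin. simpl. unfold Rsqr. ring. }
  rewrite E. pose proof PI_4.
  assert (0 <= Rabs th / 2 <= 2) by (unfold Rabs; destruct Rcase_abs; lra).
  pose proof (sin_lb_t (Rabs th / 2) ltac:(lra) ltac:(lra)).
  assert (0 <= Rabs th / 6) by lra.
  nra.
Qed.

Lemma SR_ext_zero g x0 th k M : (forall i, (i < k)%nat -> g (x0 + INR i) = 0) ->
  SR g x0 th (k + M) = SR g (x0 + INR k) th M /\ SI g x0 th (k + M) = SI g (x0 + INR k) th M.
Proof.
  revert x0. induction k; intros x0 H.
  - simpl. rewrite Rplus_0_r. auto.
  - destruct (IHk (x0 + 1)) as [A B].
    { intros i Hi. replace (x0 + 1 + INR i) with (x0 + INR (S i)) by (rewrite S_INR; ring). apply H; lia. }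
    unfold SR, SI in *. simpl plus. rewrite !(decomp_sum _ (S (k + M))) by lia. simpl pred.
    assert (H0 := H 0%nat ltac:(lia)). simpl INR in H0. rewrite Rplus_0_r in H0.
    simpl INR at 1 3. rewrite !Rplus_0_r, H0.
    rewrite (sum_eq (fun i => g (x0 + INR (S i)) * cos ((x0 + INR (S i)) * th)) (fun i => g (x0 + 1 + INR i) * cos ((x0 + 1 + INR i) * th))).
    2:{ intros; rewrite S_INR; replace (x0 + (INR i + 1)) with (x0 + 1 + INR i) by ring; reflexivity. }
    rewrite (sum_eq (fun i => g (x0 + INR (S i)) * sin ((x0 + INR (S i)) * th)) (fun i => g (x0 + 1 + INR i) * sin ((x0 + 1 + INR i) * th))).
    2:{ intros; rewrite S_INR; replace (x0 + (INR i + 1)) with (x0 + 1 + INR i) by ring; reflexivity. }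
    rewrite A, B. rewrite S_INR. replace (x0 + 1 + INR k) with (x0 + (INR k + 1)) by ring. split; ring.
Qed.

Lemma Diter_zero g m : forall x, (forall i, (i <= m)%nat -> g (x + INR i) = 0) -> Diter 1 m g x = 0.
Proof.
  induction m; intros x H.
  - simpl. specialize (H 0%nat ltac:(lia)). simpl in H. rewrite Rplus_0_r in H. auto.
  - rewrite Diter_S. rewrite !IHm. ring.
    + intros i Hi. apply H. lia.
    + intros i Hi. replace (x + 1 + INR i) with (x + INR (S i)) by (rewrite S_INR; ring). apply H. lia.
Qed.

Lemma prodB_nonneg eps h k : 0 < eps -> 0 <= h -> forall j, 0 <= prodB eps h j k.
Proof.
  intros He Hh. induction k; intros j; simpl. lra.
  apply Rmult_le_pos; auto. unfold Rdiv. apply Rmult_le_pos. lra.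
  left. apply Rinv_0_lt_compat, dl_pos; auto.
Qed.

Lemma prodB_le eps h q k : 0 < eps -> 0 <= h -> 0 <= q -> forall j,
  (forall i, (i < k)%nat -> 2 * h / dl eps (j + i) <= q) -> prodB eps h j k <= q ^ k.
Proof.
  intros He Hh Hq. induction k; intros j H; simpl. lra.
  apply Rmult_le_compat. unfold Rdiv. apply Rmult_le_pos. lra.
  left. apply Rinv_0_lt_compat, dl_pos; auto. apply prodB_nonneg; auto.
  specialize (H 0%nat ltac:(lia)). rewrite Nat.add_0_r in H. auto.
  apply IHk. intros i Hi. replace (S j + i)%nat with (j + S i)%nat by lia. apply H. lia.
Qed.

Lemma floor_nat y : 0 <= y -> exists k : nat, INR k <= y < INR k + 1.
Proof.
  intros Hy. destruct (INR_archimed 1 y ltac:(lra)) as [m Hm]. rewrite Rmult_1_r in Hm.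
  revert Hm. induction m; intros Hm. simpl in Hm; lra.
  destruct (Rlt_le_dec y (INR m)) as [H|H]. apply IHm; auto.
  exists m. rewrite S_INR in Hm. lra.
Qed.

Lemma exp_INR k : exp (INR k) = exp 1 ^ k.
Proof. induction k. simpl; apply exp_0. rewrite S_INR, exp_plus, IHk. simpl. ring. Qed.

Lemma Rpower_ge1 b z : 1 <= b -> 0 <= z -> 1 <= Rpower b z.
Proof.
  intros Hb Hz. unfold Rpower. rewrite <- exp_0. apply exp_le'.
  apply Rmult_le_pos; auto. rewrite <- ln_1. apply ln_le; lra.
Qed.

Lemma g_zero eps nr t : 0 < eps -> 0 < nr -> 3/2 * nr < Rabs t -> w eps 0 (t / nr) = 0.
Proof.
  intros He Hn Ht. apply w_supp; auto. rewrite Lt_0.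
  rewrite Rabs_div by lra. rewrite (Rabs_pos_eq nr) by lra.
  apply Rmult_lt_reg_r with nr; auto. unfold Rdiv. rewrite Rmult_assoc, Rinv_l by lra. lra.
Qed.

Lemma main_bound eps n th : 0 < eps <= 1 -> (1 <= n)%nat -> -PI <= th <= PI ->
  L_abs (w eps 0) n th <=
  18 * INR n * exp (- (1/100 * eps * INR n * Rabs th) / Rpower (ln (exp 1 + INR n * Rabs th)) (1 + eps)).
Proof.
  intros [He He1] Hn Hth.
  set (nr := INR n).
  assert (Hnr : 1 <= nr) by (unfold nr; apply (le_INR 1); auto).
  set (x := nr * Rabs th).
  assert (Hx : 0 <= x) by (unfold x; apply Rmult_le_pos; [lra|apply Rabs_pos]).
  pose proof PI_4 as HPI4. pose proof e_gt2 as He2. pose proof e_le3 as He3.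
  assert (Hthb : Rabs th <= PI) by (unfold Rabs; destruct Rcase_abs; lra).
  set (Rp := Rpower (ln (exp 1 + x)) (1 + eps)).
  assert (HRp : 1 <= Rp) by (apply Rpower_ge1; [apply ln_ge1; lra|lra]).
  set (y := eps * x / (100 * Rp)).
  assert (Hy0 : 0 <= y) by (unfold y; apply Rmult_le_pos; [apply Rmult_le_pos; lra| left; apply Rinv_0_lt_compat; lra]).
  assert (Hyx : y <= x / 100).
  { assert (E : 100 * Rp * y = eps * x) by (unfold y; field; lra). nra. }
  assert (Hyn : y <= nr) by (unfold x in Hyx; nra).
  assert (Etarget : - (1/100 * eps * nr * Rabs th) / Rp = - y).
  { unfold y, x, nr. field. lra. }
  fold nr. fold x. fold Rp. rewrite Etarget.
  destruct (floor_nat y Hy0) as [k [Hk1 Hk2]].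
  set (g := fun t => w eps 0 (t / nr)).
  set (x0 := - 2 * nr - INR k).
  set (N := (k + 4 * n)%nat).
  assert (Hgz : forall t, 3/2 * nr < Rabs t -> g t = 0).
  { intros t Ht. apply g_zero; auto. lra. }
  assert (ELr : L_re (w eps 0) n th = SR g (-2 * nr) th (4 * n)).
  { unfold L_re, SR. apply sum_eq. intros i _. unfold g.
    replace (jidx n i) with (-2 * nr + INR i) by (unfold jidx, nr; ring). reflexivity. }
  assert (ELi : L_im (w eps 0) n th = SI g (-2 * nr) th (4 * n)).
  { unfold L_im, SI. apply sum_eq. intros i _. unfold g.
    replace (jidx n i) with (-2 * nr + INR i) by (unfold jidx, nr; ring). reflexivity. }
  destruct (SR_ext_zero g x0 th k (4 * n)) as [Ex1 Ex2].
  { intros i Hi. apply Hgz. apply lt_INR in Hi. unfold x0. unfold Rabs; destruct Rcase_abs; lra. }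
  replace (x0 + INR k) with (-2 * nr) in Ex1, Ex2 by (unfold x0; ring).
  unfold L_abs. rewrite ELr, ELi, <- Ex1, <- Ex2. fold N.
  set (Q := SR g x0 th N ^ 2 + SI g x0 th N ^ 2).
  assert (HQ0 : 0 <= Q) by (unfold Q; nra).
  assert (HN1 : INR (S N) <= 6 * nr).
  { unfold N. rewrite S_INR, plus_INR, mult_INR. fold nr. simpl (INR 4). lra. }
  assert (EQ := iter_Q g x0 th N k).
  assert (Hz : forall m, (m < k)%nat -> Diter 1 m g x0 = 0 /\ Diter 1 m g (x0 + INR N + 1) = 0).
  { intros m Hm. apply lt_INR in Hm. split; apply Diter_zero; intros i Hi; apply Hgz; apply le_INR in Hi.
    - unfold x0. unfold Rabs; destruct Rcase_abs; lra.
    - unfold x0, N. rewrite plus_INR, mult_INR. fold nr. simpl (INR 4). pose proof (pos_INR i).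
      unfold Rabs; destruct Rcase_abs; lra. }
  specialize (EQ Hz). fold Q in EQ.
  set (P := prodB eps (1 / nr) 0 k).
  assert (HB : sqrt (SR (Diter 1 k g) x0 th N ^ 2 + SI (Diter 1 k g) x0 th N ^ 2) <= INR (S N) * P).
  { apply Q_bound. intros i _. unfold g. rewrite Diter_scale by lra.
    apply w_Diter; auto. unfold Rdiv; rewrite Rmult_1_l; left; apply Rinv_0_lt_compat; lra. }
  rewrite EQ in HB.
  destruct k as [|k'].
  -
    rewrite pow_O, Rmult_1_l in HB. assert (HP1 : P = 1) by reflexivity. rewrite HP1, Rmult_1_r in HB.
    assert (exp (- y) >= exp (- (1))) by (apply Rle_ge, exp_le'; simpl in Hk2; lra).
    assert (exp (- (1)) >= 1/3).
    { rewrite exp_Ropp. apply Rle_ge. apply (Rmult_le_reg_r (exp 1)). lra.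
      rewrite Rinv_l by lra. lra. }
    apply Rle_trans with (6 * nr). lra. nra.
  - set (k := S k') in *.
    assert (Hy1 : 1 <= y) by (unfold k in Hk1; rewrite S_INR in Hk1; pose proof (pos_INR k'); lra).
    assert (Hth0 : 0 < Rabs th).
    { destruct (Rabs_pos th) as [|E]; auto. unfold y, x in Hy1. rewrite <- E in Hy1.
      rewrite Rmult_0_r, Rmult_0_r in Hy1. unfold Rdiv in Hy1. rewrite Rmult_0_l in Hy1. lra. }
    set (q := Rabs th / 3 / exp 1).
    assert (HP : P <= q ^ k).
    { apply prodB_le; auto. unfold Rdiv; rewrite Rmult_1_l; left; apply Rinv_0_lt_compat; lra.
      unfold q. left. apply Rmult_lt_0_compat. lra. apply Rinv_0_lt_compat; lra.
      intros i Hi. simpl plus.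
      pose proof (dl_lb eps i He) as Hdl. pose proof (dl_pos eps i He) as Hdp.
      set (b := INR i + 1 + exp 1) in *.
      set (Rb := Rpower (ln b) (1 + eps)) in *.
      assert (Hik : INR i + 1 <= y).
      { assert (INR (S i) <= INR k) by (apply le_INR; lia). rewrite S_INR in H. lra. }
      assert (Hb1 : exp 1 <= b) by (unfold b; pose proof (pos_INR i); lra).
      assert (HRb : Rb <= Rp).
      { unfold Rb, Rp. apply Rle_Rpower_l. lra. split.
        pose proof (ln_ge1 b Hb1); lra. apply ln_le. lra. unfold b. lra. }
      assert (HRb1 : 1 <= Rb) by (apply Rpower_ge1; [apply ln_ge1|]; lra).
      assert (Hbb : b <= 4 * y) by (unfold b; lra).
      assert (K : 6 * exp 1 * (b * Rb) <= eps * x).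
      { apply Rle_trans with (18 * (4 * y) * Rp).
        apply Rle_trans with (18 * (b * Rb)). apply Rmult_le_compat_r. nra. lra.
        rewrite Rmult_assoc. apply Rmult_le_compat_l. lra. apply Rmult_le_compat; lra.
        unfold y. apply Rle_trans with (72 / 100 * (eps * x)). right. field. lra. nra. }
      assert (Hdl' : eps / (b * Rb) <= dl eps i) by exact Hdl.
      unfold q. unfold x in K.
      apply Rle_trans with (2 * (1 / nr) / (eps / (b * Rb))).
      { unfold Rdiv. apply Rmult_le_compat_l. apply Rmult_le_pos. lra. rewrite Rmult_1_l. left; apply Rinv_0_lt_compat; lra.
        apply Rinv_le_contravar. apply Rmult_lt_0_compat. lra. apply Rinv_0_lt_compat. nra. exact Hdl. }
      replace (2 * (1 / nr) / (eps / (b * Rb))) with (6 * exp 1 * (b * Rb) / (eps * nr) * (1 / (3 * exp 1))) by (field; repeat split; lra).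
      replace (Rabs th / 3 / exp 1) with (eps * (nr * Rabs th) / (eps * nr) * (1 / (3 * exp 1))) by (field; repeat split; lra).
      apply Rmult_le_compat_r. left. apply Rdiv_lt_0_compat; lra.
      unfold Rdiv. apply Rmult_le_compat_r. left. apply Rinv_0_lt_compat. nra. auto. }
    assert (HD := cos_gap th Hth).
    set (D := 2 - 2 * cos th) in *.
    set (t3 := Rabs th / 3) in *.
    assert (Ht3 : 0 < t3) by (unfold t3; lra).
    assert (L1 : t3 ^ k * sqrt Q <= sqrt (D ^ k * Q)).
    { rewrite <- (sqrt_pow2 (t3 ^ k)) by (apply pow_le; lra).
      rewrite <- sqrt_mult by (first [apply pow2_ge_0 | lra]).
      apply sqrt_le_1. apply Rmult_le_pos; [apply pow2_ge_0|]; lra.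
      apply Rmult_le_pos; [apply pow_le; nra|lra].
      apply Rmult_le_compat_r; auto. rewrite <- pow_mult. rewrite Nat.mul_comm, pow_mult.
      apply pow_incr. split; [nra|]. auto. }
    assert (Eq : q ^ k = t3 ^ k * / exp 1 ^ k).
    { unfold q. rewrite <- pow_inv. rewrite <- Rpow_mult_distr. reflexivity. }
    assert (L2 : sqrt Q <= INR (S N) * / exp 1 ^ k).
    { apply Rmult_le_reg_l with (t3 ^ k). apply pow_lt; lra.
      apply Rle_trans with (INR (S N) * P). lra.
      rewrite Eq in HP. pose proof (pos_INR (S N)).
      apply Rle_trans with (INR (S N) * (t3 ^ k * / exp 1 ^ k)). apply Rmult_le_compat_l; auto.
      right; ring. }
    assert (L3 : / exp 1 ^ k <= exp 1 * exp (- y)).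
    { rewrite <- exp_INR, <- exp_Ropp, <- exp_plus. apply exp_le'. lra. }
    assert (0 <= / exp 1 ^ k) by (left; apply Rinv_0_lt_compat, pow_lt; lra).
    pose proof (exp_pos (- y)).
    apply Rle_trans with (INR (S N) * / exp 1 ^ k). auto.
    apply Rle_trans with (6 * nr * (exp 1 * exp (- y))).
    apply Rmult_le_compat; auto. apply pos_INR.
    rewrite <- Rmult_assoc. apply Rmult_le_compat_r. lra. nra.
Qed.

Theorem theorem2p2 :
  exists c' : R, 0 < c' /\
  forall eps : R, 0 < eps <= 1 ->
  exists a : R -> R,
    smooth a /\ (exists x : R, a x <> 0) /\ supp_in_m2_2 a /\
    exists c : R, 0 < c /\
    forall (n : nat) (theta : R), (1 <= n)%nat -> -PI <= theta <= PI ->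
      L_abs a n theta <=
        c * INR n *
        exp (- (c' * eps * INR n * Rabs theta) /
             Rpower (ln (exp 1 + INR n * Rabs theta)) (1 + eps)).
Proof.
  exists (1/100). split. lra.
  intros eps Heps. exists (w eps 0). split; [|split; [|split]].
  - intros k x. apply w_smooth. lra.
  - exists 0. pose proof (w0_pos eps ltac:(lra)). lra.
  - intros x Hx. apply w_supp. lra. rewrite Lt_0. lra.
  - exists 18. split. lra. intros n theta Hn Hth. apply main_bound; auto.
Qed.
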